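(* Let $G$ be a connected graph with $n$ vertices. Then \[ Kf(G)\leq\frac{n-1}{n}\sum_{i=1}^n\alpha_i(G)^{-1}. \]
   Context: $G$ is a finite simple graph with vertex set $[n]$ and Laplacian matrix $\mathcal{L}_G=D-A$. For a vertex $i$, $\alpha_i(G)=\min\{\mathbf{x}^\top\mathcal{L}_G\mathbf{x} : \mathbf{x}\in\mathbb{R}^n_+,\ \sum_j x_j^2=1,\ x_i=0\}$ (the inverse Perron value of $i$); for connected $G$ this equals the smallest eigenvalue of the principal submatrix $\mathcal{L}_G(i)$ obtained by deleting row and column $i$. The resistance distance $r_{ij}(G)$ is the effective resistance between $i$ and $j$ when every edge is a unit resistor, and the Kirchhoff index is $Kf(G)=\sum_{\{i,j\}\subseteq V(G)}r_{ij}(G)$ (sum over unordered pairs). *)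

(* Defs.v *)
From HB Require Import structures.
From mathcomp Require Import all_boot all_order all_algebra.
From mathcomp Require Import all_classical all_reals.
Set Implicit Arguments. Unset Strict Implicit. Unset Printing Implicit Defensive.
Import Order.TTheory GRing.Theory Num.Theory.
Local Open Scope ring_scope.
Local Open Scope classical_set_scope.

Definition simple_graph (n : nat) (e : rel 'I_n) : Prop :=
  symmetric e /\ irreflexive e.

Definition connected_graph (n : nat) (e : rel 'I_n) : Prop :=
  forall i j : 'I_n, connect e i j.

Definition deg (n : nat) (e : rel 'I_n) (i : 'I_n) : nat := #|[set k | e i k]|.

Definition laplacian (R : ringType) (n : nat) (e : rel 'I_n) : 'M[R]_n :=
  \matrix_(i, j) ((i == j)%:R * (deg e i)%:R - (e i j)%:R).

Definition qform (R : ringType) (n : nat) (L : 'M[R]_n) (x : 'cV[R]_n) : R :=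
  (x^T *m L *m x) ord0 ord0.

(* inverse Perron value alpha_i(G) =
   min { x^T L x : x in R^n_+, sum_j x_j^2 = 1, x_i = 0 }
   (the minimum exists by compactness, so it equals the infimum). *)
Definition inv_perron (R : realType) (n : nat) (e : rel 'I_n) (i : 'I_n) : R :=
  inf [set t : R | exists x : 'cV[R]_n,
         [/\ (forall j, 0 <= x j ord0),
             \sum_j (x j ord0) ^+ 2 = 1,
             x i ord0 = 0 &
             t = qform (laplacian R e) x]].

(* Resistance distance (unit resistors): inject a unit current at i and
   extract it at j; the node potentials v solve L v = e_i - e_j (here as a
   row vector, L symmetric), and r_ij = v_i - v_j.  A solution is
   obtained with the partial inverse pinvmx (valid since e_i - e_j lies in
   the row space of L for connected G; the potential difference does not
   depend on the chosen solution). *)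
Definition resistance (R : realType) (n : nat) (e : rel 'I_n) (i j : 'I_n) : R :=
  let b : 'rV[R]_n := delta_mx ord0 i - delta_mx ord0 j in
  let v := b *m pinvmx (laplacian R e) in
  v ord0 i - v ord0 j.

Definition kirchhoff (R : realType) (n : nat) (e : rel 'I_n) : R :=
  \sum_(i < n) \sum_(j < n | (i < j)%N) resistance R e i j.

(* Main.v *)
Require Import Defs.
From mathcomp Require Import all_boot all_order all_algebra.
From mathcomp Require Import all_classical all_reals.
From mathcomp Require Import ring lra zify.
Set Implicit Arguments. Unset Strict Implicit. Unset Printing Implicit Defensive.
Import Order.TTheory GRing.Theory Num.Theory.
Local Open Scope ring_scope.

Lemma sum_delta (R : ringType) n (i : 'I_n) (F : 'I_n -> R) :
  \sum_k (k == i)%:R * F k = F i.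
Proof.
rewrite (bigD1 i) //= eqxx mul1r big1 ?addr0 // => k /negbTE ->.
by rewrite mul0r.
Qed.

Lemma deg_sum (R : ringType) n (e : rel 'I_n) a :
  (deg e a)%:R = \sum_b (e a b)%:R :> R.
Proof.
rewrite /deg -sumr_const big_mkcond /=; apply: eq_bigr => b _. idtac.
have -> : (b \in [set k | e a k]%classic) = e a b by apply/idP/idP; rewrite in_setE.
by case: (e a b).
Qed.

Lemma lapE (R : ringType) n (e : rel 'I_n) a b :
  laplacian R e a b = (a == b)%:R * (deg e a)%:R - (e a b)%:R.
Proof. by rewrite mxE. Qed.

Lemma lap_row (R : comRingType) n (e : rel 'I_n) (x : 'rV[R]_n) a :
  symmetric e ->
  (x *m laplacian R e) 0 a = \sum_b (e a b)%:R * (x 0 a - x 0 b).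
Proof.
move=> sym.
have -> : \sum_b (e a b)%:R * (x 0 a - x 0 b) =
   \sum_b (e a b)%:R * x 0 a - \sum_b (e a b)%:R * x 0 b.
  by rewrite -sumrB; apply: eq_bigr => b _; rewrite mulrBr.
rewrite mxE.
under eq_bigr do rewrite lapE mulrBr.
rewrite sumrB.
have -> : \sum_b x 0 b * ((b == a)%:R * (deg e b)%:R) = \sum_b (b == a)%:R * ((deg e b)%:R * x 0 b).
  by apply: eq_bigr => b _; rewrite mulrCA [x 0 b * _]mulrC.
rewrite (sum_delta a (fun k => (deg e k)%:R * x 0 k)) deg_sum mulr_suml.
congr (_ - _).
by apply: eq_bigr => b _; rewrite sym mulrC.
Qed.

Lemma lap_sym (R : ringType) n (e : rel 'I_n) :
  symmetric e -> (laplacian R e)^T = laplacian R e.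
Proof.
move=> sym; apply/matrixP => a b; rewrite mxE !lapE.
case: (eqVneq a b) => [->//|h].
by rewrite !mul0r sym.
Qed.

Lemma lap_ker (R : realFieldType) n (e : rel 'I_n) (u : 'rV[R]_n) :
  simple_graph e -> connected_graph e -> u *m laplacian R e = 0 ->
  forall a b, u 0 a = u 0 b.
Proof.
move=> [sym irr] con uL a b.
have [m _ Hm] : extremum_spec >=%O predT (fun k => u 0 k) [arg max_(k > a) u 0 k]%O.
  exact: arg_maxP.
pose S := [pred k | u 0 k == u 0 m].
have step : forall x y, e x y -> x \in S -> y \in S.
  move=> x y exy; rewrite !inE => /eqP ux.
  have := congr1 (fun M : 'rV[R]_n => M 0 x) uL; rewrite lap_row // mxE => h0.
  have pos : forall k, true -> 0 <= (e x k)%:R * (u 0 x - u 0 k).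
    move=> k _; apply: mulr_ge0; first by rewrite ler0n.
    by rewrite subr_ge0 ux; apply: Hm.
  have := @psumr_eq0P _ _ _ _ pos h0 y isT.
  rewrite exy mul1r => /eqP; rewrite subr_eq0 => /eqP <-; exact/eqP.
have cl : closed e S.
  move=> x y exy; apply/idP/idP; first exact: step.
  by apply: step; rewrite sym.
have Ha := closed_connect cl (con m a).
have Hb := closed_connect cl (con m b).
have Sm : m \in S by rewrite inE.
move: Ha Hb; rewrite Sm => /esym/eqP Ha /esym/eqP Hb.
by rewrite Ha Hb.
Qed.

Lemma w_nonneg (R : realFieldType) n (e : rel 'I_n) (w c : 'rV[R]_n) i :
  symmetric e -> w *m laplacian R e = c -> w 0 i = 0 ->
  (forall k, k != i -> 0 < c 0 k) -> forall k, 0 <= w 0 k.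
Proof.
move=> sym wL wi cpos k.
have [m _ Hm] : extremum_spec <=%O predT (fun k => w 0 k) [arg min_(j < k) w 0 j]%O.
  exact: arg_minP.
apply: (le_trans _ (Hm k isT)).
case: (leP 0 (w 0 m)) => // wm.
have mi : m != i by apply/eqP => emi; move: wm; rewrite emi wi ltxx.
have := cpos m mi.
have := congr1 (fun M : 'rV[R]_n => M 0 m) wL; rewrite lap_row //= => <-.
rewrite ltNge => /negP; case.
apply: sumr_le0 => b _; apply: mulr_ge0_le0; first by rewrite ler0n.
by rewrite subr_le0; apply: Hm.
Qed.

Definition Bf (R : comRingType) n (L : 'M[R]_n) (x y : 'rV[R]_n) : R :=
  (x *m L *m y^T) 0 0.

Lemma BfDl (R : comRingType) n (L : 'M[R]_n) x1 x2 y :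
  Bf L (x1 + x2) y = Bf L x1 y + Bf L x2 y.
Proof. by rewrite /Bf !mulmxDl mxE. Qed.

Lemma BfZl (R : comRingType) n (L : 'M[R]_n) a x y :
  Bf L (a *: x) y = a * Bf L x y.
Proof. by rewrite /Bf -!scalemxAl mxE. Qed.

Lemma Bf_sym (R : comRingType) n (L : 'M[R]_n) x y :
  L^T = L -> Bf L x y = Bf L y x.
Proof.
move=> LT; rewrite /Bf -[in LHS](trmxK (x *m L *m y^T)) mxE.
by rewrite !trmx_mul trmxK LT mulmxA.
Qed.

Lemma Bf_sum (R : comRingType) n (L : 'M[R]_n) x y :
  Bf L x y = \sum_a (x *m L) 0 a * y 0 a.
Proof. rewrite /Bf mxE; apply: eq_bigr => a _. by rewrite [y^T _ _]mxE. Qed.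

Lemma Bf_psd (R : realFieldType) n (e : rel 'I_n) x :
  symmetric e -> 0 <= Bf (laplacian R e) x x.
Proof.
move=> sym; rewrite Bf_sum.
under eq_bigr do rewrite lap_row // mulr_suml.
set T := \sum_a _.
have T2 : T = \sum_a \sum_b (e a b)%:R * (x 0 b - x 0 a) * x 0 b.
  rewrite /T exchange_big; apply: eq_bigr => a _; apply: eq_bigr => b _.
  by rewrite sym.
have : T + T = \sum_a \sum_b (e a b)%:R * (x 0 a - x 0 b) ^+ 2.
  rewrite {2}T2 /T -big_split; apply: eq_bigr => a _.
  rewrite -big_split; apply: eq_bigr => b _ /=; ring.
have : 0 <= \sum_a \sum_b (e a b)%:R * (x 0 a - x 0 b) ^+ 2.
  apply: sumr_ge0 => a _; apply: sumr_ge0 => b _.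
  by apply: mulr_ge0; rewrite ?ler0n ?sqr_ge0.
move=> h1 h2; rewrite -h2 in h1; lra.
Qed.

Lemma lap_solve (R : realFieldType) n (e : rel 'I_n) (b : 'rV[R]_n) :
  (0 < n)%N -> simple_graph e -> connected_graph e -> \sum_k b 0 k = 0 ->
  b *m pinvmx (laplacian R e) *m laplacian R e = b.
Proof.
move=> n0 [sym irr] con bs.
set L := laplacian R e.
pose a0 : 'I_n := Ordinal n0.
pose J : 'M[R]_(n, 1) := const_mx 1.
pose Jr : 'rV[R]_n := const_mx 1.
have JrL : Jr *m L = 0.
  apply/matrixP => z a; rewrite (ord1 z) lap_row // [RHS]mxE.
  by apply: big1 => k _; rewrite !mxE subrr mulr0.
have LJ : L *m J = 0.
  rewrite -[L *m J]trmxK trmx_mul lap_sym // (_ : J^T = Jr); last first.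
    by apply/matrixP => ? ?; rewrite !mxE.
  by rewrite JrL trmx0.
have bJ : b *m J = 0.
  apply/matrixP => z y; rewrite (ord1 z) (ord1 y) !mxE -[RHS]bs.
  by apply: eq_bigr => k _; rewrite mxE mulr1.
have kerL : (kermx L <= Jr)%MS.
  apply/row_subP => k.
  set u := row k (kermx L).
  have uL : u *m L = 0 by rewrite /u -row_mul mulmx_ker row0.
  have -> : u = u 0 a0 *: Jr.
    apply/rowP => a; rewrite [in RHS]mxE /Jr [const_mx _ _ _]mxE mulr1.
    exact: (lap_ker (conj sym irr) con uL).
  by apply: scalemx_sub.
have rL : (n - 1 <= \rank L)%N.
  have := mxrankS kerL; rewrite mxrank_ker.
  have := rank_leq_row Jr; lia.
have rJ : \rank J = 1%N.
  apply/eqP; rewrite eqn_leq rank_leq_col lt0n mxrank_eq0.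
  apply/eqP => /matrixP /(_ a0 0); rewrite !mxE => /eqP; rewrite oner_eq0.
  by [].
have LsJ : (L <= kermx J)%MS by rewrite sub_kermx LJ.
have := mxrank_leqif_sup LsJ; rewrite mxrank_ker rJ => /leqifP.
case: ifP => [JL _ | _]; last by lia.
apply: mulmxKpV; apply: submx_trans JL.
by rewrite sub_kermx bJ.
Qed.

Lemma tri_sum (R : ringType) n (g : 'I_n -> 'I_n -> R) :
  (forall i, g i i = 0) ->
  \sum_(i < n) \sum_(j < n | (i < j)%N) (g j i + g i j) = \sum_(i < n) \sum_(j < n) g i j.
Proof.
move=> g0.
have low : forall i : 'I_n, \sum_(j < n) g i j =
   \sum_(j < n | (i < j)%N) g i j + \sum_(j < n | (j < i)%N) g i j.
  move=> i; rewrite (bigID (fun j : 'I_n => (i < j)%N)) /=; congr (_ + _).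
  rewrite big_mkcond [RHS]big_mkcond /=; apply: eq_bigr => j _.
  case: (ltngtP i j) => //= h.
  by rewrite (_ : j = i) ?g0 //; apply: val_inj.
under [RHS]eq_bigr do rewrite low.
rewrite big_split /=.
under eq_bigr do rewrite big_split /=.
rewrite big_split /= addrC; congr (_ + _).
rewrite [RHS](eq_bigr (fun i : 'I_n => \sum_(j < n) (if (j < i)%N then g i j else 0)));
  last by move=> i _; rewrite big_mkcond.
rewrite exchange_big /=; apply: eq_bigr => i _.
by rewrite big_mkcond.
Qed.

Lemma JrL (R : comRingType) n (e : rel 'I_n) :
  symmetric e -> (const_mx 1 : 'rV[R]_n) *m laplacian R e = 0.
Proof.
move=> sym; apply/matrixP => z a; rewrite (ord1 z) lap_row // [RHS]mxE.
by apply: big1 => k _; rewrite !mxE subrr mulr0.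
Qed.

Definition cvec (R : ringType) n (i : 'I_n) : 'rV[R]_n :=
  \row_k (1 - n%:R * (k == i)%:R).

Definition wvec (R : realFieldType) n (e : rel 'I_n) (i : 'I_n) : 'rV[R]_n :=
  let y := cvec R i *m pinvmx (laplacian R e) in y - (y 0 i) *: const_mx 1.

Lemma cvec_sum (R : comRingType) n (i : 'I_n) : \sum_k cvec R i 0 k = 0.
Proof.
under eq_bigr do rewrite mxE.
rewrite sumrB sumr_const card_ord.
under eq_bigr do rewrite mulrC.
by rewrite (sum_delta i (fun _ => n%:R)) subrr.
Qed.

Lemma wvecL (R : realFieldType) n (e : rel 'I_n) i :
  simple_graph e -> connected_graph e ->
  wvec R e i *m laplacian R e = cvec R i.
Proof.
move=> sg con; have [sym _] := sg.
have n0 : (0 < n)%N by apply: (leq_ltn_trans _ (ltn_ord i)).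
rewrite /wvec mulmxBl -scalemxAl JrL // scaler0 subr0.
exact: lap_solve n0 sg con (cvec_sum R i).
Qed.

Lemma wvec_i (R : realFieldType) n (e : rel 'I_n) i : wvec R e i 0 i = 0.
Proof. by rewrite /wvec !mxE mulr1 subrr. Qed.

Lemma wvec_ge0 (R : realFieldType) n (e : rel 'I_n) i :
  simple_graph e -> connected_graph e -> forall k, 0 <= wvec R e i 0 k.
Proof.
move=> sg con; have [sym _] := sg.
apply: (w_nonneg sym (@wvecL R n e i sg con) (@wvec_i R n e i)) => k ki.
by rewrite mxE (negbTE ki) mulr0 subr0 ltr01.
Qed.

Lemma Bf_w (R : realFieldType) n (e : rel 'I_n) i x :
  simple_graph e -> connected_graph e ->
  Bf (laplacian R e) x (wvec R e i) = \sum_a x 0 a - n%:R * x 0 i.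
Proof.
move=> sg con; have [sym _] := sg.
rewrite Bf_sym ?lap_sym // Bf_sum wvecL //.
under eq_bigr do rewrite mxE mulrBl mul1r.
rewrite sumrB; congr (_ - _).
under eq_bigr do rewrite mulrC mulrA mulrC.
by rewrite (sum_delta i (fun k => x 0 k * n%:R)) mulrC.
Qed.

Lemma other_ord n (i : 'I_n) : (1 < n)%N -> exists k : 'I_n, k != i.
Proof.
move=> n1; have n0 : (0 < n)%N by apply: ltnW.
case: (eqVneq i (Ordinal n0)) => [-> | h]; last by exists (Ordinal n0); rewrite eq_sym.
by exists (Ordinal n1); apply/eqP => /(congr1 val).
Qed.

Lemma w_s_pos (R : realFieldType) n (e : rel 'I_n) i :
  (1 < n)%N -> simple_graph e -> connected_graph e ->
  0 < \sum_k wvec R e i 0 k.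
Proof.
move=> n1 sg con.
have ge0 := @wvec_ge0 R n e i sg con.
rewrite lt_def sumr_ge0 ?andbT //; apply/eqP => s0.
have w0 : wvec R e i = 0.
  apply/rowP => k; rewrite [RHS]mxE.
  exact: (@psumr_eq0P _ _ _ _ (fun k _ => ge0 k) s0 k isT).
have [k ki] := other_ord i n1.
have := congr1 (fun M : 'rV[R]_n => M 0 k) (@wvecL R n e i sg con).
by rewrite w0 mul0mx !mxE (negbTE ki) mulr0 subr0 => /eqP; rewrite eq_sym oner_eq0.
Qed.

Lemma w_CS (R : realFieldType) n (e : rel 'I_n) i :
  (1 < n)%N -> simple_graph e -> connected_graph e ->
  (\sum_k wvec R e i 0 k) ^+ 2 <= (n.-1)%:R * \sum_k (wvec R e i 0 k) ^+ 2.
Proof.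
move=> n1 sg con.
set w := wvec R e i; set s := \sum_k w 0 k; set q := \sum_k (w 0 k) ^+ 2.
set N : R := (n.-1)%:R.
have wi : w 0 i = 0 by exact: wvec_i.
have Npos : 0 < N by rewrite ltr0n -subn1 subn_gt0.
have sD : s = \sum_(k | k != i) w 0 k by rewrite /s (bigD1 i) //= wi add0r.
have qD : q = \sum_(k | k != i) (w 0 k) ^+ 2.
  by rewrite /q (bigD1 i) //= wi expr0n add0r.
have cD : \sum_(k | k != i) (1 : R) = N.
  by rewrite sumr_const cardC1 card_ord.
have h : 0 <= \sum_(k | k != i) (N * w 0 k - s) ^+ 2.
  by apply: sumr_ge0 => k _; apply: sqr_ge0.
have E : \sum_(k | k != i) (N * w 0 k - s) ^+ 2 =
   \sum_(k | k != i) (N ^+ 2 * (w 0 k) ^+ 2 - (2 * N * s) * w 0 k + s ^+ 2 * 1).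
  by apply: eq_bigr => k _; ring.
rewrite E big_split /= sumrB -!mulr_sumr -qD -sD cD in h.
have : 0 <= N * (N * q - s ^+ 2).
  by rewrite (_ : N * (N * q - s ^+ 2) = N ^+ 2 * q - 2 * N * s * s + s ^+ 2 * N) //; ring.
by rewrite pmulr_rge0 // subr_ge0.
Qed.

Lemma Bf_quad (R : comRingType) n (L : 'M[R]_n) a b x y : L^T = L ->
  Bf L (a *: x + b *: y) (a *: x + b *: y) =
  a ^+ 2 * Bf L x x + 2 * a * b * Bf L x y + b ^+ 2 * Bf L y y.
Proof.
move=> LT; rewrite BfDl !BfZl Bf_sym // BfDl !BfZl.
rewrite [Bf L y (a *: x + b *: y)]Bf_sym // BfDl !BfZl.
rewrite [Bf L y x]Bf_sym //; ring.
Qed.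

Lemma qformE (R : comRingType) n (L : 'M[R]_n) x : qform L x = Bf L x^T x^T.
Proof. by rewrite /qform /Bf trmxK. Qed.

Lemma perron_lower (R : realType) n (e : rel 'I_n) i (x : 'cV[R]_n) :
  (1 < n)%N -> simple_graph e -> connected_graph e ->
  (forall j, 0 <= x j ord0) -> \sum_j (x j ord0) ^+ 2 = 1 -> x i ord0 = 0 ->
  1 / (\sum_k wvec R e i 0 k) <= qform (laplacian R e) x.
Proof.
move=> n1 sg con xge0 x1 xi; have [sym _] := sg.
set w := wvec R e i; set s := \sum_k w 0 k.
have spos : 0 < s by exact: w_s_pos.
set u := x^T.
have uE : forall k, u 0 k = x k ord0 by move=> k; rewrite mxE.
rewrite qformE -/u.
set t := \sum_a u 0 a.
have ut : Bf (laplacian R e) u w = t by rewrite Bf_w // uE xi mulr0 subr0.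
have ww : Bf (laplacian R e) w w = s.
  by rewrite Bf_w // (@wvec_i R n e i) mulr0 subr0.
have t1 : 1 <= t * t.
  rewrite -{1}x1 /t mulr_suml; apply: ler_sum => k _.
  rewrite -uE expr2; apply: ler_wpM2l; first by rewrite uE.
  rewrite /t (bigD1 k) //= lerDl; apply: sumr_ge0 => j _; rewrite uE //.
have := Bf_psd (s *: u + (- t) *: w) sym.
rewrite Bf_quad ?lap_sym // ut ww.
set B := Bf _ u u => h.
have h2 : 0 <= s * (s * B - t * t).
  by rewrite (_ : s * (s * B - t * t) = s ^+ 2 * B + 2 * s * - t * t + (- t) ^+ 2 * s) //; ring.
rewrite pmulr_rge0 // subr_ge0 in h2.
rewrite ler_pdivrMr // mulrC; exact: le_trans t1 h2.
Qed.

Lemma perron_key (R : realType) n (e : rel 'I_n) i :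
  (1 < n)%N -> simple_graph e -> connected_graph e ->
  (\sum_k wvec R e i 0 k) / (n.-1)%:R <= (inv_perron R e i)^-1.
Proof.
move=> n1 sg con; have [sym _] := sg.
set w := wvec R e i; set s := \sum_k w 0 k; set q := \sum_k (w 0 k) ^+ 2.
set N : R := (n.-1)%:R.
have Npos : 0 < N by rewrite ltr0n -subn1 subn_gt0.
have spos : 0 < s by exact: w_s_pos.
have CS : s ^+ 2 <= N * q by exact: w_CS.
have qpos : 0 < q.
  rewrite ltNge; apply/negP => hq.
  have : N * q <= 0 by rewrite pmulr_rle0.
  have : 0 < s ^+ 2 by rewrite exprn_gt0.
  move=> h1 h2; have := lt_le_trans h1 (le_trans CS h2); by rewrite ltxx.
have wge0 := @wvec_ge0 R n e i sg con.
have wi : w 0 i = 0 by exact: wvec_i.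
set r := (Num.sqrt q)^-1.
have rge0 : 0 <= r by rewrite invr_ge0 sqrtr_ge0.
have r2 : r ^+ 2 = q^-1 by rewrite /r exprVn sqr_sqrtr // ltW.
pose x : 'cV[R]_n := r *: w^T.
have xE : forall j, x j ord0 = r * w 0 j by move=> j; rewrite !mxE.
have qx : qform (laplacian R e) x = r ^+ 2 * s.
  rewrite qformE /x linearZ /= trmxK BfZl Bf_sym ?lap_sym // BfZl.
  rewrite Bf_w // wi mulr0 subr0 -/s; ring.
set S := [set t : R | exists x : 'cV[R]_n,
         [/\ (forall j, 0 <= x j ord0),
             \sum_j (x j ord0) ^+ 2 = 1,
             x i ord0 = 0 &
             t = qform (laplacian R e) x]]%classic.
have Sx : S (r ^+ 2 * s).
  exists x; split => //.
  - by move=> j; rewrite xE mulr_ge0.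
  - under eq_bigr do rewrite xE exprMn.
    by rewrite -mulr_sumr -/q r2 mulVf // gt_eqF.
  - by rewrite xE wi mulr0.
have lb : lbound S (1 / s).
  move=> y [z [z0 z1 zi ->]]; exact: perron_lower.
have ip : inv_perron R e i = inf S by [].
have lo : 1 / s <= inf S by apply: lb_le_inf => //; exists (r ^+ 2 * s).
have hi : inf S <= r ^+ 2 * s.
  by apply: ge_inf => //; exists (1 / s).
have apos : 0 < inf S by apply: lt_le_trans lo; rewrite divr_gt0.
rewrite ip.
have : (r ^+ 2 * s)^-1 <= (inf S)^-1.
  by rewrite lef_pV2 // ?posrE // mulr_gt0 // r2 invr_gt0.
apply: le_trans.
rewrite r2 invfM invrK ler_pdivrMr // mulrAC ler_pdivlMr //.
by rewrite -expr2 mulrC.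
Qed.

Lemma res_formula (R : realType) n (e : rel 'I_n) i j :
  simple_graph e -> connected_graph e ->
  n%:R * resistance R e i j = wvec R e j 0 i + wvec R e i 0 j.
Proof.
move=> sg con; have [sym _] := sg.
have n0 : (0 < n)%N by apply: (leq_ltn_trans _ (ltn_ord i)).
set L := laplacian R e.
set d : 'rV[R]_n := delta_mx 0 i - delta_mx 0 j.
have dE : forall a, d 0 a = (a == i)%:R - (a == j)%:R by move=> a; rewrite !mxE.
have ds : \sum_k d 0 k = 0.
  under eq_bigr do rewrite dE -[(_ == i)%:R]mulr1 -[(_ == j)%:R]mulr1.
  by rewrite sumrB (sum_delta i (fun _ => 1)) (sum_delta j (fun _ => 1)) subrr.
set v := d *m pinvmx L.
have vL : v *m L = d by exact: lap_solve.
set u := wvec R e j - wvec R e i.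
have uL : u *m L = cvec R j - cvec R i by rewrite mulmxBl !wvecL.
have h1 : Bf L v u = u 0 i - u 0 j.
  rewrite Bf_sum vL.
  under eq_bigr do rewrite dE mulrBl.
  by rewrite sumrB (sum_delta i (fun a => u 0 a)) (sum_delta j (fun a => u 0 a)).
have h2 : Bf L u v = n%:R * v 0 i - n%:R * v 0 j.
  rewrite Bf_sum uL.
  have E : forall a, (cvec R j - cvec R i) 0 a * v 0 a =
     (a == i)%:R * (n%:R * v 0 a) - (a == j)%:R * (n%:R * v 0 a).
    by move=> a; rewrite !mxE; ring.
  under eq_bigr do rewrite E.
  by rewrite sumrB (sum_delta i (fun a => n%:R * v 0 a)) (sum_delta j (fun a => n%:R * v 0 a)).
have mB : forall (A B : 'rV[R]_n) a, (A - B) 0 a = A 0 a - B 0 a.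
  by move=> A B a; rewrite !mxE.
rewrite /resistance /= -/L -/d -/v mulrBr -h2 -Bf_sym ?lap_sym // h1 /u (mB (wvec R e j) (wvec R e i) i) (mB (wvec R e j) (wvec R e i) j).
rewrite !wvec_i; ring.
Qed.

Theorem corollary4p3 (R : realType) (n : nat) (e : rel 'I_n) :
  simple_graph e -> connected_graph e ->
  kirchhoff R e <= (n.-1)%:R / n%:R * \sum_(i < n) (inv_perron R e i)^-1.
Proof.
move=> sg con.
case: (leqP n 1) => n1.
  have -> : kirchhoff R e = 0.
    apply: big1 => i _; apply: big1 => j ij; exfalso.
    have := ltn_ord j; move: ij; lia.
  by rewrite (_ : n.-1 = 0%N) ?mul0r ?mulr0 //; lia.
have n0 : (0 < n)%N by lia.
have npos : 0 < n%:R :> R by rewrite ltr0n.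
pose g i j := wvec R e i 0 j.
have rE : forall i j, resistance R e i j = n%:R^-1 * (g j i + g i j).
  by move=> i j; rewrite -res_formula // mulKf // gt_eqF.
rewrite /kirchhoff.
under eq_bigr do under eq_bigr do rewrite rE.
under eq_bigr do rewrite -mulr_sumr.
rewrite -mulr_sumr tri_sum; last by move=> i; exact: wvec_i.
set N : R := (n.-1)%:R.
have Npos : 0 < N by rewrite ltr0n -subn1 subn_gt0.
have key : \sum_i \sum_j g i j <= N * \sum_(i < n) (inv_perron R e i)^-1.
  rewrite mulr_sumr; apply: ler_sum => i _.
  have := @perron_key R n e i n1 sg con; rewrite ler_pdivrMr // mulrC; exact.
rewrite (_ : N / n%:R * _ = n%:R^-1 * (N * \sum_(i < n) (inv_perron R e i)^-1)); last by ring.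
apply: ler_wpM2l; last exact: key.
by rewrite invr_ge0 ltW.
Qed.
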